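(* Let $\mathbb{F}$ be a finite field of characteristic $2$, let $h,n$ be positive integers, and let $S=\{\alpha_1,\ldots,\alpha_n\}$ be a multi-set of $n$ elements of $\mathbb{F}$. Let $A(S,h)=[a_{ij}]$ be the $h\times n$ matrix with $a_{ij}=\alpha_j^{2^{i-1}}$, and let $\mathcal{C}(S,h)\subseteq\mathbb{F}^n$ be the linear code with parity check matrix $A(S,h)$, i.e. the set of all $(x_1,\ldots,x_n)\in\mathbb{F}^n$ with $\sum_{i=1}^n\alpha_i^{2^{j-1}}x_i=0$ for $j=1,\ldots,h$. Then $\mathcal{C}(S,h)$ has minimum distance $h+1$ if and only if $S$ is $h$-wise independent over $\mathbb{F}_2$.
   Context: A multi-set $S\subseteq\mathbb{F}$ is $t$-wise independent over a subfield $\mathbb{F}'\subseteq\mathbb{F}$ if every sub-multi-set $T\subseteq S$ with $|T|\le t$ is linearly independent over $\mathbb{F}'$ (in particular a multi-set containing a repeated element or $0$ within such a $T$ is dependent). *)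

(* Defs.v *)
From HB Require Import structures.
From mathcomp Require Import all_boot all_order all_algebra all_field.
Set Implicit Arguments. Unset Strict Implicit. Unset Printing Implicit Defensive.
Import GRing.Theory.
Local Open Scope ring_scope.

(* A multi-set S = {alpha_1, ..., alpha_n} of elements of F is represented by
   an indexing function alpha : 'I_n -> F (repetitions allowed). *)

(* Linear independence over the prime subfield F_2 = {0, 1} of F (char F = 2)
   of the sub-multi-set {alpha_i | i in I}: every F_2-linear combination
   (coefficients c i in {0,1}, embedded as (c i)%:R) equal to 0 is trivial. *)
Definition F2_lin_indep (F : fieldType) (n : nat) (alpha : 'I_n -> F)
  (I : {set 'I_n}) : Prop :=
  forall c : 'I_n -> bool,
    \sum_(i in I) (c i)%:R * alpha i = 0 -> forall i, i \in I -> c i = false.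

Definition twise_indep_F2 (F : fieldType) (n : nat) (alpha : 'I_n -> F)
  (t : nat) : Prop :=
  forall I : {set 'I_n}, (#|I| <= t)%N -> F2_lin_indep alpha I.

Definition code_Sh (F : fieldType) (n h : nat) (alpha : 'I_n -> F)
  (x : 'rV[F]_n) : Prop :=
  forall j : nat, (j < h)%N -> \sum_(i < n) alpha i ^+ (2 ^ j) * x 0 i = 0.

Definition hweight (F : fieldType) (n : nat) (x : 'rV[F]_n) : nat :=
  #|[set i | x 0 i != 0]|.

Definition has_min_dist (F : fieldType) (n : nat) (C : 'rV[F]_n -> Prop)
  (d : nat) : Prop :=
  (exists2 x, C x & x != 0 /\ hweight x = d) /\
  (forall x, C x -> x != 0 -> (d <= hweight x)%N).

(* Main.v *)
Require Import Defs.
From HB Require Import structures.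
From mathcomp Require Import all_boot all_order all_algebra all_field.
Local Open Scope ring_scope.
Import GRing.Theory.
Set Implicit Arguments.

Section Aux.
Variable F : finFieldType.
Hypothesis chF2 : (2 \in [pchar F])%N.

Lemma two0 : (2%:R : F) = 0.
Proof. exact: pcharf0. Qed.

Lemma frobD (j : nat) (x y : F) : (x + y) ^+ (2 ^ j) = x ^+ (2 ^ j) + y ^+ (2 ^ j).
Proof.
elim: j => [|j IH]; first by rewrite !expr1.
rewrite expnSr !exprM IH sqrrD -mulr_natr two0 mulr0 addr0.
by [].
Qed.

Lemma frob_sum (I : finType) (j : nat) (f : I -> F) :
  (\sum_i f i) ^+ (2 ^ j) = \sum_i f i ^+ (2 ^ j).
Proof.
apply: (big_morph (fun x => x ^+ (2 ^ j))).
  by move=> x y; rewrite frobD.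
by rewrite expr0n expn_eq0.
Qed.

Lemma boolX (b : bool) (m : nat) : (0 < m)%N -> (b%:R : F) ^+ m = b%:R.
Proof. by case: b => /= hm; [rewrite expr1n | rewrite expr0n; case: m hm]. Qed.
End Aux.

Section Moore.
Variable F : finFieldType.
Hypothesis chF2 : (2 \in [pchar F])%N.

Lemma moore t (b : 'I_t -> F)
  (indep : forall c : 'I_t -> bool, \sum_i (c i)%:R * b i = 0 -> forall i, c i = false)
  (y : 'rV[F]_t) (hy : forall i, \sum_(j < t) y 0 j * b i ^+ (2 ^ j) = 0) : y = 0.
Proof.
apply/eqP/negPn/negP => ynz.
have [k yk] : exists k, y 0 k != 0.
  apply/existsP; apply: contraNT ynz; rewrite negb_exists => /forallP H.
  by apply/eqP/rowP => j; rewrite mxE; apply/eqP; move: (H j); rewrite negbK.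
pose p : {poly F} := \sum_(j < t) y 0 j *: 'X^(2 ^ j).
have pnz : p != 0.
  apply: contraNneq yk => p0.
  have := congr1 (fun q : {poly F} => q`_(2 ^ k)) p0.
  rewrite coef0 /p coef_sumMXn (bigD1 k) ?eqxx //= big1 ?addr0 => [->//|j].
  by case/andP; rewrite eqn_exp2l // => /eqP/val_inj ->; rewrite eqxx.
pose r (A : {set 'I_t}) := \sum_i (i \in A)%:R * b i.
have rinj : injective r.
  move=> A B rAB; apply/setP => i; apply/eqP; apply: negbFE.
  apply: (indep (fun i => (i \in A) != (i \in B))).
  have -> : \sum_i ((i \in A) != (i \in B))%:R * b i = r A + r B.
    rewrite /r -big_split /=; apply: eq_bigr => j _; rewrite -mulrDl.
    by case: (j \in A); case: (j \in B); rewrite /= ?add0r ?addr0 // -natrD two0 // mul0r.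
  by rewrite rAB -mulr2n -mulr_natr two0 // mulr0.
pose rs := [seq r A | A <- enum (powerset [set: 'I_t])].
have := max_poly_roots pnz _ _ (rs := rs).
have -> : size rs = (2 ^ t)%N by rewrite size_map -cardE card_powerset cardsT card_ord.
have szp : (size p <= 2 ^ t)%N.
  rewrite /p; apply: (big_ind (fun q : {poly F} => size q <= 2 ^ t)%N).
  - by rewrite size_poly0.
  - by move=> q1 q2 h1 h2; apply: leq_trans (size_polyD _ _) _; rewrite geq_max h1 h2.
  move=> j _; apply: leq_trans (size_scale_leq _ _) _; rewrite size_polyXn.
  by rewrite ltn_exp2l.
move=> H; have := H _ _; rewrite ltnNge szp => /(_ _ _)/negP; apply => //.
  apply/allP => _ /mapP[A _ ->]; rewrite /root /p horner_sum.
  rewrite (eq_bigr (fun j => \sum_i (i \in A)%:R * (y 0 j * b i ^+ (2 ^ j)))).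
    by rewrite exchange_big big1 // => i _; rewrite -mulr_sumr hy mulr0.
  move=> j _; rewrite hornerZ hornerXn /r frob_sum // mulr_sumr.
  by apply: eq_bigr => i _; rewrite exprMn boolX ?expn_gt0 // mulrCA.
by rewrite map_inj_uniq // enum_uniq.
Qed.
End Moore.

Section Lower.
Variable F : finFieldType.
Hypothesis chF2 : (2 \in [pchar F])%N.

Lemma nz_row_ex m (x : 'rV[F]_m) : x != 0 -> exists k, x 0 k != 0.
Proof.
move=> xnz; apply/existsP; apply: contraNT xnz; rewrite negb_exists => /forallP H.
by apply/eqP/rowP => j; rewrite mxE; apply/eqP; move: (H j); rewrite negbK.
Qed.

Lemma lower n h (alpha : 'I_n -> F) : twise_indep_F2 alpha h ->
  forall x, code_Sh h alpha x -> x != 0 -> (h < hweight x)%N.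
Proof.
move=> ind x cx xnz; rewrite ltnNge; apply/negP => hw.
pose T := [set i | x 0 i != 0].
have hT : (#|T| <= h)%N by [].
pose t := #|T|.
pose b (i : 'I_t) := alpha (enum_val i).
pose M : 'M[F]_t := \matrix_(j, i) b i ^+ (2 ^ j).
pose v : 'rV[F]_t := \row_i x 0 (enum_val i).
have [k0 xk0] := nz_row_ex x xnz.
have k0T : k0 \in T by rewrite inE.
have vnz : v != 0.
  apply/negP => /eqP/rowP/(_ (enum_rank_in k0T k0)).
  by rewrite !mxE enum_rankK_in //; apply/eqP.
have detT : \det M^T == 0.
  apply/det0P; exists v => //; apply/rowP => j; rewrite !mxE.
  have jh : (j < h)%N by apply: leq_trans (ltn_ord j) hT.
  have := cx j jh; rewrite (bigID (fun k => k \in T)) /= [X in _ + X]big1 ?addr0.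
    rewrite big_enum_val => h0; rewrite -[X in _ = X]h0; apply: eq_bigr => i _; rewrite !mxE mulrC.
    done.
  by move=> k; rewrite inE negbK => /eqP ->; rewrite mulr0.
rewrite det_tr in detT.
have [y ynz yM] := det0P detT.
suff : y = 0 by move/eqP; rewrite (negbTE ynz).
apply: (@moore F chF2 t b).
  move=> c hc i.
  pose c' k := [exists i, (enum_val i == k) && c i].
  have hc' : forall i, c' (enum_val i) = c i.
    move=> i'; apply/existsP/idP => [[i'' /andP[/eqP/enum_val_inj -> //]]|ci].
    by exists i'; rewrite eqxx.
  rewrite -hc'; apply: (ind T hT c') ; last exact: enum_valP.
  rewrite big_enum_val -[RHS]hc; apply: eq_bigr => i' _; by rewrite hc'.
move=> i; have := congr1 (fun w : 'rV[F]_t => w 0 i) yM; rewrite !mxE => h0.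
by rewrite -[X in _ = X]h0; apply: eq_bigr => j _; rewrite mxE.
Qed.
End Lower.

Theorem lemma9 (F : finFieldType) (chF2 : (2 \in [pchar F])%N)
  (h n : nat) (h_gt0 : (0 < h)%N) (n_gt0 : (0 < n)%N) (hn : (h < n)%N)
  (alpha : 'I_n -> F) :
  has_min_dist (code_Sh h alpha) h.+1 <-> twise_indep_F2 alpha h.
Proof.
split.
  case=> _ hmin I hI c hc i iI; apply/negP => ci.
  pose x : 'rV[F]_n := \row_k ((k \in I) && c k)%:R.
  have cx : code_Sh h alpha x.
    move=> j jh; have := congr1 (fun z => z ^+ (2 ^ j)) hc.
    rewrite expr0n expn_eq0 /= mulr0n big_mkcond /= frob_sum // => h0.
    rewrite -[X in _ = X]h0; apply: eq_bigr => k _.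
    rewrite mxE; case: (k \in I) => /=; last by rewrite mulr0 expr0n expn_eq0.
    by rewrite exprMn boolX ?expn_gt0 // mulrC.
  have xnz : x != 0.
    apply/negP => /eqP/rowP/(_ i); rewrite !mxE iI ci /= => /eqP.
    by rewrite oner_eq0.
  have := hmin x cx xnz; rewrite ltnNge => /negP; apply.
  apply: leq_trans _ hI; apply: subset_leq_card; apply/subsetP => k.
  by rewrite inE /x mxE; case: (k \in I) => //=; rewrite mulr0n eqxx.
move=> ind; split; last by move=> x cx xnz; apply: (lower chF2 ind).
pose s : 'I_h.+1 -> 'I_n := widen_ord hn.
pose N : 'M[F]_h.+1 := \matrix_(j, i) if (j < h)%N then alpha (s i) ^+ (2 ^ j) else 0.
have detN : \det N == 0.
  apply/det0P; exists ('e_ord_max : 'rV[F]_h.+1).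
    apply/negP => /eqP/rowP/(_ ord_max); rewrite !mxE !eqxx /= => /eqP.
    by rewrite oner_eq0.
  by rewrite -rowE; apply/rowP => i; rewrite !mxE /= ltnn.
rewrite -det_tr in detN.
have [w wnz wN] := det0P detN.
pose x : 'rV[F]_n := \row_k if (k < h.+1)%N then w 0 (inord k) else 0.
have sK : forall i, inord (s i) = i by move=> i; apply: val_inj; rewrite /= inordK.
have cx : code_Sh h alpha x.
  move=> j jh.
  rewrite (bigID (fun k : 'I_n => (k < h.+1)%N)) /= [X in _ + X]big1 ?addr0; last first.
    by move=> k /negbTE hk; rewrite mxE hk mulr0.
  rewrite big_ord_narrow.
  have := congr1 (fun v : 'rV[F]_h.+1 => v 0 (inord j)) wN; rewrite !mxE => h0.
  rewrite -[X in _ = X]h0; apply: eq_bigr => i _.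
  rewrite !mxE /= ltn_ord sK inordK ?jh; last by apply: leq_trans jh _.
  by rewrite mulrC.
have [i wi] := @nz_row_ex F _ w wnz.
have xnz : x != 0.
  apply/negP => /eqP/rowP/(_ (s i)); rewrite !mxE /= ltn_ord sK => /eqP.
  by rewrite (negbTE wi).
exists x => //; split => //; apply/eqP; rewrite eqn_leq (lower chF2 ind cx xnz) andbT.
apply: (@leq_trans #|s @: [set: 'I_h.+1]|); last by rewrite (leq_trans (leq_imset_card _ _)) // cardsT card_ord.
apply: subset_leq_card; apply/subsetP => k; rewrite inE mxE.
case: ifP => [hk _|]; last by rewrite eqxx.
apply/imsetP; exists (inord k); rewrite ?inE //.
by apply: val_inj; rewrite /= inordK.
Qed.
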